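(* Let $\Gamma=(V,E)$ be a connected directed graph with $|V|=\infty$ and let $W(\Gamma)$ be the set of its words. Then for each $w\in W(\Gamma)$ and each $n\in\mathbb N$ there exists a word $w'\in W(\Gamma)$ of the form $w'=ww_1ww_2w\cdots w_{n-1}w$, with $w_i\in W(\Gamma)$, containing $n$ disjoint subwords equal to $w$, and such that the word $w'':=ww_1ww_2w\cdots w_{n-1}$ is simple.
   Context: A word of $\Gamma$ is a finite path $(v_1,\dots,v_k)$, i.e. $v_i\in V$ and $(v_i,v_{i+1})\in E$; words are concatenated by juxtaposition. $u$ is a subword of a word if it appears as a consecutive block. A word $(v_1,\dots,v_n)$, $n\ge2$, is simple if there is no $k$ with $2\le k\le n$ and $(v_1,\dots,v_{n-k+1})=(v_k,\dots,v_n)$. Connected means that for any two vertices there is a directed path from one to the other. *)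

(* Defs.v *)
From Stdlib Require Import List.
From mathcomp Require Import all_boot.
Set Implicit Arguments. Unset Strict Implicit. Unset Printing Implicit Defensive.

Fixpoint edge_chain (V : Type) (E : V -> V -> Prop) (w : seq V) : Prop :=
  match w with
  | x :: ((y :: _) as t) => E x y /\ edge_chain E t
  | _ => True
  end.

Definition is_word (V : Type) (E : V -> V -> Prop) (w : seq V) : Prop :=
  w <> [::] /\ edge_chain E w.

Definition infinite_type (V : Type) : Prop :=
  ~ exists s : seq V, forall v : V, List.In v s.

Definition connected_graph (V : Type) (E : V -> V -> Prop) : Prop :=
  forall u v : V, exists p : seq V, is_word E (u :: p) /\ last u p = v.

(* (v_1,...,v_n), n >= 2, is simple if there is no k, 2 <= k <= n, with
   (v_1,...,v_{n-k+1}) = (v_k,...,v_n). *)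
Definition simple_word (V : Type) (w : seq V) : Prop :=
  2 <= size w /\
  forall k, 2 <= k -> k <= size w -> take (size w - k + 1) w <> drop (k - 1) w.

(* w' contains n pairwise disjoint (non-overlapping) subwords equal to w:
   there are n starting positions p_1 < ... < p_n, each p_{i+1} >= p_i + |w|,
   at which w occurs as a consecutive block of w'. *)
Definition has_disjoint_occurrences (V : Type) (n : nat) (w w' : seq V) : Prop :=
  exists ps : seq nat,
    size ps = n /\ sorted (fun a b => a + size w <= b) ps /\
    forall p, p \in ps -> p + size w <= size w' /\ take (size w) (drop p w') = w.

Definition interleave (V : Type) (w : seq V) (ws : seq (seq V)) : seq V :=
  flatten [seq w ++ u | u <- ws].

(* Main.v *)
Require Import Defs.
From Stdlib Require Import List.
From mathcomp Require Import all_boot.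
From Stdlib Require Import Classical ClassicalEpsilon.
From mathcomp Require Import zify.
Set Implicit Arguments. Unset Strict Implicit.

Section Aux.
Variable V : Type.
Variable E : V -> V -> Prop.

Definition Eb (x y : V) : bool :=
  if excluded_middle_informative (E x y) then true else false.

Lemma EbP x y : Eb x y <-> E x y.
Proof. rewrite /Eb; case: excluded_middle_informative => //. Qed.

Lemma chainP x s : edge_chain E (x :: s) <-> path Eb x s.
Proof.
elim: s x => [|y s IH] x /=; first by split.
split.
- move=> [H1 H2]; apply/andP; split; [exact/EbP | exact/IH].
- move/andP=> [H1 H2]; split; [exact/EbP | exact/IH].
Qed.

Lemma In_cat (T : Type) (x : T) s1 s2 : In x (s1 ++ s2) <-> In x s1 \/ In x s2.
Proof.
elim: s1 => [|a s1 IH] /=; first by intuition.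
rewrite IH; intuition.
Qed.

Lemma nth_In (T : Type) (x0 : T) s i : i < size s -> In (nth x0 s i) s.
Proof.
elim: s i => [|a s IH] [|i] //= Hi; first by left.
right; exact: IH.
Qed.

Lemma In_last (T : Type) (h : T) s : In (last h s) (h :: s).
Proof.
elim: s h => [|a s IH] h /=; first by left.
right; exact: IH.
Qed.

Lemma first_hit v p u : path Eb u p -> last u p = v -> u <> v ->
  exists q, path Eb u (q ++ [:: v]) /\ ~ In v q.
Proof.
elim: p u => [|x p IH] u /=; first by move=> _ H1 H2; case: H2.
move=> /andP [Hux Hp] Hl Huv.
case: (classic (x = v)) => [Hxv|Hxv].
- exists [::]; split => //=; by rewrite -Hxv Hux.
- have [q [Hq Hn]] := IH x Hp Hl Hxv.
  exists (x :: q); split; first by rewrite /= Hux Hq.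
  move=> [H|H]; [by apply: Hxv | exact: Hn H].
Qed.

Lemma through t h x : connected_graph E -> x <> t -> x <> h ->
  exists q r, path Eb t (q ++ x :: r ++ [:: h]) /\ ~ In x q /\ ~ In h r.
Proof.
move=> Hc Hxt Hxh.
have [p1 [[_ Hp1] Hl1]] := Hc t x.
have [p2 [[_ Hp2] Hl2]] := Hc x h.
move/chainP: Hp1 => Hp1; move/chainP: Hp2 => Hp2.
have [q [Hq Hnq]] := first_hit Hp1 Hl1 (fun e => Hxt (esym e)).
have [r [Hr Hnr]] := first_hit Hp2 Hl2 Hxh.
exists q, r; split => //.
move: Hq; rewrite !cat_path /= andbT => /andP [-> ->] /=.
by rewrite -cat1s cat1s Hr.
Qed.

Lemma interleave_cons (w u : seq V) ws :
  interleave w (u :: ws) = w ++ u ++ interleave w ws.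
Proof. by rewrite /interleave /= catA. Qed.

Lemma interleave_chain h w0 ws :
  path Eb h w0 ->
  (forall u, In u ws -> path Eb (last h w0) (u ++ [:: h])) ->
  exists Y, interleave (h :: w0) ws ++ (h :: w0) = h :: Y /\ path Eb h Y.
Proof.
move=> Hw; elim: ws => [|u ws IH] Hu.
  by exists w0; split.
have [Y [HY HpY]] := IH (fun v Hv => Hu v (or_intror Hv)).
rewrite interleave_cons -!catA HY.
exists (w0 ++ u ++ h :: Y); split => //.
have := Hu u (or_introl erefl).
rewrite !cat_path Hw /= andbT => /andP [-> ->] /=.
exact: HpY.
Qed.

Lemma interleave_head (h : V) w0 ws X :
  exists s', interleave (h :: w0) ws ++ (h :: w0) ++ X = h :: s'.
Proof.
case: ws => [|u ws]; first by eexists.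
rewrite interleave_cons /=; by eexists.
Qed.

Lemma In_interleave_nseq (w m : seq V) k y :
  In y (interleave w (nseq k m)) -> In y w \/ In y m.
Proof.
elim: k => [|k IH] //=.
rewrite interleave_cons !In_cat; intuition.
Qed.

Lemma In_nseq (T : Type) k (m u : T) : In u (nseq k m) -> u = m.
Proof. elim: k => [|k IH] //= [->|H] //; exact: IH. Qed.

End Aux.

Lemma occ (V : Type) (w : seq V) ws :
  has_disjoint_occurrences (size ws).+1 w (interleave w ws ++ w).
Proof.
elim: ws => [|u ws [ps [Hs [Hso Hp]]]].
  exists [:: 0]; split => //; split => //.
  move=> p; rewrite inE => /eqP -> /=.
  by rewrite drop0 take_size.
set K := size w + size u.
exists (0 :: map (addn K) ps); split; first by rewrite /= size_map Hs.
split.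
  rewrite /=; case: ps Hs Hso Hp => [|p0 ps] //= _ Hso _.
  apply/andP; split; first by lia.
  rewrite path_map; rewrite -(@eq_path _ (fun a b => a + size w <= b)) //.
  by move=> a b /=; rewrite -addnA leq_add2l.
move=> p; rewrite inE => /orP [/eqP ->|/mapP [p' Hp' ->]].
  rewrite interleave_cons -!catA add0n drop0 size_cat leq_addr; split => //.
  by rewrite take_size_cat.
have [H1 H2] := Hp p' Hp'.
rewrite interleave_cons -!catA catA.
have HK : size (w ++ u) = K by rewrite size_cat.
split.
  by rewrite size_cat HK -addnA leq_add2l.
by rewrite addnC -drop_drop -HK drop_size_cat.
Qed.

Lemma border (T : Type) (P r : seq T) (z h : T) (s' : seq T) :
  P ++ z :: r = h :: s' -> ~ In z P -> ~ In h r ->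
  forall k, 2 <= k -> k <= size (P ++ z :: r) ->
  take (size (P ++ z :: r) - k + 1) (P ++ z :: r) <> drop (k - 1) (P ++ z :: r).
Proof.
move=> Hs HzP Hhr k Hk2 HkN Heq.
have HN : size (P ++ z :: r) = size P + (size r).+1 by rewrite size_cat.
have key : forall i, i < size (P ++ z :: r) - k + 1 ->
    nth h (P ++ z :: r) i = nth h (P ++ z :: r) (k - 1 + i).
  by move=> i Hi; rewrite -(nth_take _ Hi) Heq nth_drop.
case: (leqP (k - 1) (size P)) => Hd.
- have Hi : size P - (k - 1) < size (P ++ z :: r) - k + 1 by rewrite HN; lia.
  have := key _ Hi.
  rewrite subnKC // !nth_cat ltnn subnn /=.
  have -> : size P - (k - 1) < size P by lia.
  move=> He; apply: HzP; rewrite -He; apply: nth_In; lia.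
- have Hi : 0 < size (P ++ z :: r) - k + 1 by lia.
  have := key _ Hi.
  rewrite {1}Hs /= addn0 nth_cat ltnNge (ltnW Hd) /=.
  have -> : k - 1 - size P = (k - 1 - size P - 1).+1 by lia.
  move=> /= He; apply: Hhr; rewrite He; apply: nth_In; lia.
Qed.

Lemma fresh (V : Type) : infinite_type V -> forall s : seq V, exists v, ~ In v s.
Proof.
move=> Hinf s; apply: NNPP => H; apply: Hinf; exists s => v.
apply: NNPP => Hv; apply: H; by exists v.
Qed.

Theorem lemma5p2 (V : Type) (E : V -> V -> Prop) :
  infinite_type V -> connected_graph E ->
  forall (w : seq V) (n : nat), is_word E w -> 2 <= n ->
  exists ws : seq (seq V),
    size ws = n.-1 /\
    (forall u, List.In u ws -> is_word E u) /\
    (* w' = w w_1 w w_2 w ... w_{n-1} w is a word *)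
    is_word E (interleave w ws ++ w) /\
    has_disjoint_occurrences n w (interleave w ws ++ w) /\
    (* w'' = w w_1 w w_2 w ... w_{n-1} is simple *)
    simple_word (interleave w ws).
Proof.
move=> Hinf Hconn w n [Hw0 Hwc] Hn.
case: w Hw0 Hwc => [//|h w0] _ Hwc.
move/chainP: Hwc => Hw.
set t := last h w0.
have Ht : In t (h :: w0) by exact: In_last.
have [z1 Hz1] := fresh Hinf (h :: w0).
have Hz1t : z1 <> t by move=> e; apply: Hz1; rewrite e.
have Hz1h : z1 <> h by move=> e; apply: Hz1; rewrite e; left.
have [q1 [r1 [Hm _]]] := through Hconn Hz1t Hz1h.
set m := q1 ++ z1 :: r1.
have [z Hz] := fresh Hinf ((h :: w0) ++ m).
have Hzt : z <> t by move=> e; apply: Hz; apply/In_cat; left; rewrite e.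
have Hzh : z <> h by move=> e; apply: Hz; rewrite e; left.
have [q [r [Hc [Hzq Hhr]]]] := through Hconn Hzt Hzh.
set c := q ++ z :: r.
exists (nseq (n - 2) m ++ [:: c]).
have Hgood : forall u, In u (nseq (n - 2) m ++ [:: c]) ->
    path (Eb E) t (u ++ [:: h]) /\ u <> [::].
  move=> u /In_cat [Hu|[<-|//]].
    rewrite (In_nseq Hu).
    split; [by rewrite /m -catA | by rewrite /m; case: (q1)].
  split; [by rewrite /c -catA | by rewrite /c; case: (q)].
have Hsz : size (nseq (n - 2) m ++ [:: c]) = n.-1 by rewrite size_cat size_nseq /=; lia.
split => //.
split.
  move=> u /Hgood [Hu Hne]; split => //.
  case: u Hu Hne => [|a u] // Hu _; apply/chainP.
  by move: Hu; rewrite /= => /andP [_]; rewrite cat_path => /andP [].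
split.
  have [Y [HY HpY]] := interleave_chain Hw (fun u Hu => proj1 (Hgood u Hu)).
  rewrite HY; split => //; exact/chainP.
split.
  have := occ (h :: w0) (nseq (n - 2) m ++ [:: c]).
  by rewrite Hsz; have -> : n.-1.+1 = n by lia.
have Heq : interleave (h :: w0) (nseq (n - 2) m ++ [:: c]) =
    (interleave (h :: w0) (nseq (n - 2) m) ++ (h :: w0) ++ q) ++ z :: r.
  by rewrite /interleave map_cat flatten_cat /= cats0 /c -!catA /= -!catA.
rewrite /simple_word Heq; split.
  rewrite !size_cat /=; lia.
have [s' Hs'] := interleave_head h w0 (nseq (n - 2) m) (q ++ z :: r).
apply: (@border _ _ _ _ h s') => //.
  by rewrite -!catA; exact: Hs'.
move=> H; case/(In_cat z): H => [H|H].
  case: (In_interleave_nseq E H) => H'.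
  - by apply: Hz; apply/In_cat; left.
  - by apply: Hz; apply/In_cat; right.
case/(In_cat z): H => [H|H].
- by apply: Hz; apply/In_cat; left.
- by apply: Hzq.
Qed.
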